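(* Let $d\ge 2$ and $m\ge 1$. Let $h_0,\ldots,h_{m-1}$ be $m$ distinct hyperplanes in $\mathbb{R}^d$ that all contain a common $(d-2)$-flat $\ell$, dividing $\mathbb{R}^d$ into $2m$ parts (the connected components of the complement of their union). Let $P=\{p_0,\ldots,p_{2m-1}\}$ consist of $2m$ points, one from each part. Then at least $\frac{(m+1)m(m-1)}{3}$ of the triangles with vertices in $P$ intersect $\ell$.
   Context: A $(d-2)$-flat is a $(d-2)$-dimensional affine subspace of $\mathbb{R}^d$. A triangle with vertices in $P$ is the closed convex hull of a $3$-element subset of $P$. *)

(* Defs.v *)
From HB Require Import structures.
From mathcomp Require Import all_boot all_order all_algebra.
From mathcomp Require Import all_classical all_reals all_analysis.
Set Implicit Arguments. Unset Strict Implicit. Unset Printing Implicit Defensive.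
Import Order.TTheory GRing.Theory Num.Theory.
Import numFieldNormedType.Exports.
Local Open Scope ring_scope.
Local Open Scope classical_set_scope.

(* The hyperplane {x | <a, x> = b}  (meaningful when a != 0). *)
Definition hyperplane (R : realType) (d : nat) (a : 'rV[R]_d) (b : R)
  : set 'rV[R]_d := [set x | (x *m a^T) 0 0 = b].

Definition is_flat (R : realType) (d k : nat) (L : set 'rV[R]_d) : Prop :=
  exists (c : 'rV[R]_d) (B : 'M[R]_(k, d)),
    row_free B /\ L = [set x | exists u : 'rV[R]_k, x = c + u *m B].

Definition conv_hull (R : realType) (d n : nat) (p : 'I_n -> 'rV[R]_d)
  (S : {set 'I_n}) : set 'rV[R]_d :=
  [set x | exists w : 'I_n -> R,
     [/\ forall i, 0 <= w i,
         forall i, i \notin S -> w i = 0,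
         \sum_i w i = 1 &
         x = \sum_i w i *: p i]].

(* Number of triangles (3-element subsets of the point set, given by
   indices of the injective family p) that intersect L. *)
Definition num_triangles_meeting (R : realType) (d n : nat)
  (p : 'I_n -> 'rV[R]_d) (L : set 'rV[R]_d) : nat :=
  #|[set S : {set 'I_n} | (#|S| == 3)%N &&
       `[< exists x, L x /\ conv_hull p S x >] ]|.

Definition same_component (R : realType) (d : nat) (U : set 'rV[R]_d)
  (x y : 'rV[R]_d) : Prop :=
  @connected_component 'rV[R]_d U x y.

(* Main.v *)
Require Import Defs.
From HB Require Import structures.
From mathcomp Require Import all_boot all_order all_algebra.
From mathcomp Require Import all_classical all_reals all_analysis.
From mathcomp Require Import ring lra zify.
Import Order.TTheory GRing.Theory Num.Theory.
Local Open Scope ring_scope.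
Local Open Scope classical_set_scope.

Module Aux.
Set Implicit Arguments. Unset Strict Implicit. Unset Printing Implicit Defensive.
Import numFieldNormedType.Exports.
Local Close Scope classical_set_scope.
Lemma sum_delta (R : pzRingType) (n : nat) (F : 'I_n -> R) k :
  \sum_j F j * (j == k)%:R = F k.
Proof.
rewrite (bigD1 k) //= eqxx mulr1 big1 ?addr0 // => j /negbTE ->; by rewrite mulr0.
Qed.

Lemma card_bigcup_le (I T : finType) (F : I -> {set T}) :
  (#|\bigcup_i F i| <= \sum_i #|F i|)%N.
Proof.
elim/big_rec2: _ => [|i A s _ IH]; first by rewrite cards0.
by apply: leq_trans (leq_card_setU _ _) _; rewrite leq_add2l.
Qed.

Lemma set3_of (T : finType) (S : {set T}) : #|S| = 3%N ->
  exists x y z, [/\ x != y, y != z, z != x & forall j, (j \in S) = [|| j == x, j == y | j == z]].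
Proof.
move=> S3; have : (0 < #|S|)%N by rewrite S3.
case/card_gt0P=> x xS.
have : #|S :\ x| == 2%N by move: S3; rewrite (cardsD1 x) xS add1n => -[->].
case/cards2P=> y [z [yz E]].
have yS : y \in S :\ x by rewrite E !inE ?eqxx.
have zS : z \in S :\ x by rewrite E !inE ?eqxx ?orbT.
move: yS zS; rewrite !inE => /andP[yx _] /andP[zx _].
exists x, y, z; split => //; first by rewrite eq_sym.
move=> j; have [->|jx] := eqVneq j x; first by rewrite xS ?eqxx.

by have := finset.setD1K xS; move=> <-; rewrite in_setU1 E !inE (negbTE jx).
Qed.

Lemma predn_inj (a b : nat) : a.-1 = b.-1 -> (0 < a)%N -> (0 < b)%N -> a = b.
Proof. lia. Qed.

Lemma predn_m (a b : nat) : a.-1 = b.-1 -> (0 < a)%N -> (0 < b)%N -> a = b.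
Proof. lia. Qed.

Lemma arith j G c3 c2 e : (6*c3 = (2*j+4)*(2*j+3)*(2*j+2) -> 2*c2 = (j+1)*j ->
  c3 <= G + (2*j+4)*c2 + e*(j+1) -> e <= j+2 -> (j+3)*(j+2)*(j+1) <= 3*G)%N.
Proof.
move=> h1 h2 h3 h4.
have h5 : (e * (j+1) <= (j+2) * (j+1))%N by rewrite leq_mul2r h4 orbT.
have h6 : (2 * ((2*j+4)*c2) = (2*j+4)*((j+1)*j))%N by rewrite mulnCA h2.
lia.
Qed.

Lemma bin3 n : (6 * 'C(n.+3, 3) = n.+3 * n.+2 * n.+1)%N.
Proof.
have := mul_bin_diag n.+3 2; have := mul_bin_diag n.+2 1; rewrite bin1 /=.
move=> h1 h2. lia.
Qed.

Lemma bin2' n : (2 * 'C(n.+1, 2) = n.+1 * n)%N.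
Proof. have := mul_bin_diag n.+1 1; rewrite bin1 /=; lia. Qed.

Section Core.
Variables (R : realFieldType) (n m : nat) (u v : 'I_n -> R) (al be : 'I_m -> R).
Definition det k l := u k * v l - v k * u l.
Definition dot k l := u k * u l + v k * v l.
Definition gg i k := al i * u k + be i * v k.
Hypothesis Hg : forall i k, gg i k != 0.
Hypothesis Hs : forall k l, (forall i, (0 < gg i k) = (0 < gg i l)) -> k = l.
Hypothesis m_gt0 : (0 < m)%N.

Lemma nrm_gt0 k : 0 < dot k k.
Proof.
have := Hg (Ordinal m_gt0) k; rewrite /gg /dot => H.
have [u0|u0] := eqVneq (u k) 0; last by nra.
have [v0|v0] := eqVneq (v k) 0; last by nra.
by move: H; rewrite u0 v0 !mulr0 addr0 eqxx.
Qed.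

Lemma det0_id k l i : det k l = 0 -> dot k k * gg i l = dot k l * gg i k.
Proof.
move=> D; apply/eqP; rewrite -subr_eq0; apply/eqP.
have -> : dot k k * gg i l - dot k l * gg i k = (be i * u k - al i * v k) * det k l
  by rewrite /dot /gg /det; ring.
by rewrite D mulr0.
Qed.

Lemma det0_pos k l : det k l = 0 -> 0 < dot k l -> k = l.
Proof.
move=> D P; apply: Hs => i; have E := det0_id i D; have N := nrm_gt0 k.
apply/idP/idP => H.
  have : 0 < dot k l * gg i k by rewrite mulr_gt0.
  by rewrite -E pmulr_rgt0.
have : 0 < dot k k * gg i l by rewrite mulr_gt0.
by rewrite E pmulr_rgt0.
Qed.


Definition Zc (S : {set 'I_n}) := exists w : 'I_n -> R,
  [/\ forall j, 0 <= w j, forall j, j \notin S -> w j = 0, \sum_j w j = 1,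
      \sum_j w j * u j = 0 & \sum_j w j * v j = 0].

Definition good (S : {set 'I_n}) :=
  exists2 x, x \in S & forall y, y \in S -> y != x -> 0 < det x y.

Lemma Zc3 (S : {set 'I_n}) k1 k2 k3 w1 w2 w3 :
  k1 \in S -> k2 \in S -> k3 \in S -> 0 <= w1 -> 0 <= w2 -> 0 <= w3 ->
  0 < w1 + w2 + w3 -> w1 * u k1 + w2 * u k2 + w3 * u k3 = 0 ->
  w1 * v k1 + w2 * v k2 + w3 * v k3 = 0 -> Zc S.
Proof.
move=> k1S k2S k3S w1p w2p w3p sp Eu Ev.
set s := w1 + w2 + w3.
pose w j := (w1 * (j == k1)%:R + w2 * (j == k2)%:R + w3 * (j == k3)%:R) / s.
have E : forall F : 'I_n -> R, \sum_j w j * F j = (w1 * F k1 + w2 * F k2 + w3 * F k3) / s.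
  move=> F; rewrite -[LHS]/(\sum_j w j * F j).
  transitivity ((\sum_j ((w1 * F j) * (j == k1)%:R + (w2 * F j) * (j == k2)%:R
                         + (w3 * F j) * (j == k3)%:R)) / s).
    by rewrite mulr_suml; apply: eq_bigr => j _; rewrite /w; ring.
  by rewrite !big_split /= !sum_delta.
exists w; split.
- move=> j; rewrite /w; apply: divr_ge0; last exact: ltW.
  by rewrite !addr_ge0 // mulr_ge0 // ler0n.
- move=> j jS; rewrite /w.
  have -> : (j == k1) = false by apply/negbTE; apply: contraNneq jS => ->.
  have -> : (j == k2) = false by apply/negbTE; apply: contraNneq jS => ->.
  have -> : (j == k3) = false by apply/negbTE; apply: contraNneq jS => ->.
  by rewrite !mulr0 !addr0 mul0r.
- have := E (fun _ => 1); rewrite /= => E1.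
  transitivity (\sum_j w j * 1); first by apply: eq_bigr => j _; rewrite mulr1.
  by rewrite E1 !mulr1 divff // gt_eqF.
- by rewrite E Eu mul0r.
- by rewrite E Ev mul0r.
Qed.

Lemma pair0 (S : {set 'I_n}) a b : a \in S -> b \in S -> a != b -> det a b = 0 -> Zc S.
Proof.
move=> aS bS ab D.
have [P|P] := ltP 0 (dot a b); first by move: ab; rewrite (det0_pos D P) eqxx.
apply: (@Zc3 S a b a (dot b b) (- dot a b) 0) => //.
- exact: ltW (nrm_gt0 b).
- by rewrite oppr_ge0.
- by rewrite addr0 subr_gt0; apply: le_lt_trans P (nrm_gt0 b).
- move: D; rewrite /det /dot => D.
  have -> : (u b * u b + v b * v b) * u a + - (u a * u b + v a * v b) * u b + 0 * u a
     = v b * (u a * v b - v a * u b) by ring.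
  by rewrite D mulr0.
- move: D; rewrite /det /dot => D.
  have -> : (u b * u b + v b * v b) * v a + - (u a * u b + v a * v b) * v b + 0 * v a
     = - u b * (u a * v b - v a * u b) by ring.
  by rewrite D mulr0.
Qed.

Lemma triple (S : {set 'I_n}) : #|S| = 3%N -> Zc S \/ good S.
Proof.
case/set3_of=> x [y [z [xy yz zx memb]]].
have xS : x \in S by rewrite memb eqxx.
have yS : y \in S by rewrite memb eqxx orbT.
have zS : z \in S by rewrite memb eqxx !orbT.
have Iu : det y z * u x + det z x * u y + det x y * u z = 0 by rewrite /det; ring.
have Iv : det y z * v x + det z x * v y + det x y * v z = 0 by rewrite /det; ring.
have [D1|n1] := eqVneq (det y z) 0; first by left; exact: pair0 yS zS yz D1.
have [D2|n2] := eqVneq (det z x) 0; first by left; exact: pair0 zS xS zx D2.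
have [D3|n3] := eqVneq (det x y) 0; first by left; exact: pair0 xS yS xy D3.
have anti a b : det a b = - det b a by rewrite /det; ring.
have gx : 0 < det x y -> det z x < 0 -> good S.
  move=> h3 h2; exists x => // t; rewrite memb => /or3P[/eqP->|/eqP->|/eqP->].
  - by rewrite eqxx.
  - by [].
  - by rewrite anti oppr_gt0.
have gy : 0 < det y z -> det x y < 0 -> good S.
  move=> h1 h3; exists y => // t; rewrite memb => /or3P[/eqP->|/eqP->|/eqP->].
  - by rewrite anti oppr_gt0.
  - by rewrite eqxx.
  - by [].
have gz : 0 < det z x -> det y z < 0 -> good S.
  move=> h2 h1; exists z => // t; rewrite memb => /or3P[/eqP->|/eqP->|/eqP->].
  - by [].
  - by rewrite anti oppr_gt0.
  - by rewrite eqxx.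
case/orP: (lt_total n1) => h1; case/orP: (lt_total n2) => h2;
  case/orP: (lt_total n3) => h3;
  try (by right; first [exact: gx | exact: gy | exact: gz]).
- left; apply: (@Zc3 S x y z (- det y z) (- det z x) (- det x y)) => //.
  + by rewrite oppr_ge0 ltW.
  + by rewrite oppr_ge0 ltW.
  + by rewrite oppr_ge0 ltW.
  + lra.
  + by rewrite !mulNr -!opprD Iu oppr0.
  + by rewrite !mulNr -!opprD Iv oppr0.
- left; apply: (@Zc3 S x y z (det y z) (det z x) (det x y)) => //; try exact: ltW.
  lra.
Qed.


Definition Hx x := [set y | 0 < det x y].
Definition Tset x y := [set i | (0 < gg i y) != (0 < gg i x)].

Lemma mono x y z i : 0 < det x y -> 0 < det x z -> 0 < det y z ->
  i \in Tset x y -> i \in Tset x z.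
Proof.
move=> d1 d2 d3; rewrite !inE => Hb.
have I : det y z * gg i x + det z x * gg i y + det x y * gg i z = 0
  by rewrite /det /gg; ring.
have dzx : det z x = - det x z by rewrite /det; ring.
have na := Hg i x; have nb := Hg i y; have nc := Hg i z.
case: (ltgtP 0 (gg i x)) => [a0|a0|a0]; last by move: na; rewrite -a0 eqxx.
- have b0 : gg i y < 0.
    have : ~~ (0 < gg i y) by move: Hb; rewrite a0; case: (0 < gg i y).
    by rewrite -leNgt lt_neqAle nb.
  have P1 : 0 < det y z * gg i x by rewrite mulr_gt0.
  have P2 : 0 < det z x * gg i y by rewrite dzx mulNr oppr_gt0 pmulr_rlt0.
  have P3 : det x y * gg i z < 0 by lra.
  by move: P3; rewrite pmulr_rlt0 // => c0; rewrite (lt_gtF c0).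
- have b0 : 0 < gg i y.
    have : (0 < gg i y) by move: Hb; rewrite (lt_gtF a0); case: (0 < gg i y).
    by [].
  have P1 : det y z * gg i x < 0 by rewrite pmulr_rlt0.
  have P2 : det z x * gg i y < 0 by rewrite dzx mulNr oppr_lt0 mulr_gt0.
  have P3 : 0 < det x y * gg i z by lra.
  by move: P3; rewrite pmulr_rgt0 // => c0; rewrite c0.
Qed.


Lemma anti a b : det a b = - det b a.
Proof. by rewrite /det; ring. Qed.

Lemma detxx a : det a a = 0.
Proof. by rewrite /det mulrC subrr. Qed.

Lemma Tset_eq x y z : Tset x y = Tset x z -> y = z.
Proof.
move=> E; apply: Hs => i; have : (i \in Tset x y) = (i \in Tset x z) by rewrite E.
rewrite !inE.
by case: (0 < gg i y); case: (0 < gg i z); case: (0 < gg i x).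
Qed.

Lemma Tset_nz x y : y \in Hx x -> Tset x y != finset.set0.
Proof.
rewrite inE => d; apply/eqP => E.
have : Tset x y = Tset x x by rewrite E; apply/setP => i; rewrite !inE eqxx.
by move/Tset_eq => yx; move: d; rewrite yx detxx ltxx.
Qed.

Lemma det_nz x y z : y \in Hx x -> z \in Hx x -> y != z -> det y z != 0.
Proof.
rewrite !inE => dy dz yz; apply/eqP => D.
have I : dot y y * det x z - dot y z * det x y = dot x y * det y z
  by rewrite /dot /det; ring.
have E : dot y y * det x z = dot y z * det x y.
  by apply/eqP; rewrite -subr_eq0 I D mulr0.
have P : 0 < dot y z.
  have : 0 < dot y z * det x y by rewrite -E mulr_gt0 // nrm_gt0.
  by rewrite pmulr_lgt0.
by move: yz; rewrite (det0_pos D P) eqxx.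
Qed.

Lemma chain x y z : y \in Hx x -> z \in Hx x ->
  (Tset x y \subset Tset x z) || (Tset x z \subset Tset x y).
Proof.
move=> yH zH; have [->|yz] := eqVneq y z; first by rewrite subxx.
have := det_nz yH zH yz; move: (yH) (zH); rewrite !inE => dy dz nz.
case/orP: (lt_total nz) => h.
  apply/orP; right; apply/fintype.subsetP => i; apply: mono => //.
  by rewrite anti oppr_gt0.
by apply/orP; left; apply/fintype.subsetP => i; apply: mono.
Qed.

Lemma Tcard_inj x y z : y \in Hx x -> z \in Hx x -> #|Tset x y| = #|Tset x z| -> y = z.
Proof.
move=> yH zH C; apply: (@Tset_eq x).
case/orP: (chain yH zH) => sub.
  by apply/eqP; rewrite -(subset_leqif_cards sub) C.
by apply/esym/eqP; rewrite -(subset_leqif_cards sub) C.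
Qed.

Definition eps x := [exists y, (y \in Hx x) && (Tset x y == finset.setT)].

Lemma phi_lt x y : (#|Tset x y|.-1 < m)%N.
Proof.
have := max_card (mem (Tset x y)); rewrite card_ord.
by case: #|_| => //= k; rewrite ltnS.
Qed.

Lemma card_Hx x : (#|Hx x| <= m.-1 + eps x)%N.
Proof.
pose phi y : 'I_m := Ordinal (phi_lt x y).
have inj : {in Hx x &, injective phi}.
  move=> y z yH zH /(congr1 val) /= E.
  apply: (Tcard_inj yH zH).
  have h1 : (0 < #|Tset x y|)%N by rewrite card_gt0 Tset_nz.
  have h2 : (0 < #|Tset x z|)%N by rewrite card_gt0 Tset_nz.
  exact: predn_inj E h1 h2.
rewrite -(card_in_imset inj).
case e: (eps x).
  by rewrite addn1 prednK // (leq_trans (max_card _)) // card_ord.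
have top : (m.-1 < m)%N by rewrite prednK.
have sub : phi @: Hx x \subset [set~ Ordinal top].
  apply/fintype.subsetP => _ /imsetP[y yH ->]; rewrite !inE; apply/negP => /eqP /(congr1 val) /= E.
  move/negbT: e; rewrite negb_exists => /forallP /(_ y); rewrite yH /=.
  apply/negPn; rewrite eqEcard finset.subsetT cardsT card_ord.
  have h1 : (0 < #|Tset x y|)%N by rewrite card_gt0 Tset_nz.
  by rewrite negbK /= (predn_inj E h1 m_gt0).
by rewrite addn0 (leq_trans (subset_leq_card sub)) // cardsC1 card_ord.
Qed.


Definition ant x := odflt x [pick y | (y \in Hx x) && (Tset x y == finset.setT)].

Lemma antP x : eps x -> ant x \in Hx x /\ Tset x (ant x) = finset.setT.
Proof.
rewrite /eps /ant => /existsP[y0 Hy0]; case: pickP => [y /andP[yH /eqP T]|] //=.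
by move/(_ y0); rewrite Hy0.
Qed.

Lemma TsetT x y i : Tset x y = finset.setT -> (0 < gg i y) != (0 < gg i x).
Proof. move=> E; have : i \in Tset x y by rewrite E inE. by rewrite inE. Qed.

Lemma TsetT_uniq x x' y : Tset x y = finset.setT -> Tset x' y = finset.setT -> x = x'.
Proof.
move=> E E'; apply: Hs => i; have := TsetT i E; have := TsetT i E'.
by case: (0 < gg i y); case: (0 < gg i x); case: (0 < gg i x').
Qed.

Lemma TsetT_back x y z : Tset x y = finset.setT -> Tset y z = finset.setT -> z = x.
Proof.
move=> E E'; apply: Hs => i; have := TsetT i E; have := TsetT i E'.
by case: (0 < gg i y); case: (0 < gg i x); case: (0 < gg i z).
Qed.

Lemma card_eps : (2 * #|[set x | eps x]| <= n)%N.
Proof.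
set E := [set x | eps x].
have inj : {in E &, injective ant}.
  move=> x1 x2; rewrite !inE => /antP[_ T1] /antP[_ T2] e.
  by apply: (@TsetT_uniq _ _ (ant x1)) => //; rewrite e.
have dis : E :&: ant @: E = finset.set0.
  apply/setP => y; rewrite !inE; apply/negP => /andP[ey /imsetP[x]].
  rewrite inE => ex yE; have [xH Tx] := antP ex.
  have [zH Tz] := antP ey.
  move: Tx; rewrite -yE => Tx.
  have zx := TsetT_back Tx Tz.
  move: zH xH; rewrite zx -yE !inE anti oppr_gt0 => h1 h2.
  by move: (lt_trans h1 h2); rewrite ltxx.
have := max_card (mem (E :|: ant @: E)).
by rewrite cardsU dis cards0 subn0 (card_in_imset inj) card_ord addnn -mul2n.
Qed.


Lemma count_main (Q : pred {set 'I_n}) : (forall S : {set 'I_n}, #|S| = 3%N -> Zc S -> Q S) ->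
  n = (2 * m)%N ->
  ((m + 1) * m * (m - 1) <= 3 * #|[set S : {set 'I_n} | (#|S| == 3%N) && Q S]|)%N.
Proof.
move=> HQ nE.
set Tr := [set S : {set 'I_n} | #|S| == 3%N].
set G := [set S : {set 'I_n} | (#|S| == 3%N) && Q S].
pose piece x := [set x |: B | B in [set B : {set 'I_n} | B \subset Hx x & #|B| == 2%N]].
have sub : Tr \subset G :|: \bigcup_x piece x.
  apply/fintype.subsetP => S; rewrite inE => /eqP S3.
  case: (triple S3) => [Z|[x xS gx]].
    by rewrite inE; apply/orP; left; rewrite inE S3 eqxx HQ.
  rewrite inE; apply/orP; right; apply/bigcupP; exists x => //.
  apply/imsetP; exists (S :\ x); last by rewrite finset.setD1K.
  rewrite inE; apply/andP; split.
    by apply/fintype.subsetP => y; rewrite !inE => /andP[yx yS]; exact: gx.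
  have := cardsD1 x S; rewrite xS S3 => E; apply/eqP; move: E.
  by rewrite add1n => -[].
have c1 : (#|Tr| <= #|G| + \sum_x 'C(#|Hx x|, 2))%N.
  apply: leq_trans (subset_leq_card sub) _.
  apply: leq_trans (leq_card_setU _ _) _; rewrite leq_add2l.
  apply: leq_trans (card_bigcup_le _) _; apply: leq_sum => x _.
  by apply: leq_trans (leq_imset_card _ _) _; rewrite cards_draws.
have c2 : (\sum_x 'C(#|Hx x|, 2) <= \sum_x ('C(m.-1, 2) + eps x * m.-1))%N.
  apply: leq_sum => x _; have := card_Hx x; case: (eps x) => h.
    rewrite mul1n; apply: leq_trans (leq_bin2l _ h) _.
    by rewrite addn1 binS bin1.
  by rewrite mul0n addn0; apply: leq_bin2l; rewrite addn0 in h.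
rewrite big_split /= sum_nat_const card_ord -big_distrl /= in c2.
have cE : (\sum_x (eps x : nat) = #|[set x | eps x]|)%N.
  rewrite -sum1_card [RHS]big_mkcond /=; apply: eq_bigr => x _; rewrite inE.
  by case: (eps x).
rewrite cE in c2.
have cT : #|Tr| = 'C(n, 3) by rewrite card_draws card_ord.
have ce := card_eps.
have main : ('C(n,3) <= #|G| + (n * 'C(m.-1,2) + #|[set x | eps x]| * m.-1))%N.
  by rewrite -cT (leq_trans c1) // leq_add2l.
move: main ce; move: #|G| #|[set x | eps x]| => g e main ce.
rewrite nE in main ce.
have [m1|[j mj]] : m = 1%N \/ exists j, m = j.+2.
  by move: m_gt0; case: (m) => [|[|j]] //; [left | right; exists j].
  by rewrite m1 muln0.
rewrite mj in main ce *.
have e1 : (2 * j.+2 = (2*j+1).+3)%N by lia.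
have h1 := bin3 (2*j+1); rewrite -e1 in h1.
have h2 := bin2' j.
have e3 : (j.+2 + 1 = j + 3)%N by lia.
have e4 : (j.+2 = j + 2)%N by lia.
have e5 : (j.+2 - 1 = j + 1)%N by lia.
rewrite e3 e5 e4.
apply: (@arith j g 'C(2 * j.+2, 3) 'C(j.+1, 2) e) => //.
- rewrite h1; lia.
- by rewrite h2 addn1.
- move: main; rewrite /=. lia.
- lia.
Qed.

End Core.


Local Open Scope classical_set_scope.
Lemma ker_sub (F : fieldType) (d p q : nat) (X : 'M[F]_(p, d)) (Y : 'M[F]_(q, d))
  (z : 'rV[F]_d) :
  X *m Y^T = 0 -> (d <= \rank X + \rank Y)%N -> z *m Y^T = 0 -> (z <= X)%MS.
Proof.
move=> XY rk zY.
have sXK : (X <= kermx Y^T)%MS by apply/sub_kermxP.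
have rK : \rank (kermx Y^T) = (d - \rank Y)%N by rewrite mxrank_ker mxrank_tr.
have : (kermx Y^T <= X)%MS.
  have h := mxrankS sXK; rewrite rK in h.
  rewrite -(mxrank_leqif_sup sXK) rK; apply/eqP; lia.
by apply: submx_trans; apply/sub_kermxP.
Qed.

Lemma lin_entry (R : pzRingType) (d n : nat) (y : 'I_n -> 'rV[R]_d) (w : 'I_n -> R) (a : 'rV[R]_d) :
  ((\sum_j w j *: y j) *m a^T) 0 0 = \sum_j w j * (y j *m a^T) 0 0.
Proof.
rewrite mulmx_suml summxE; apply: eq_bigr => j _.
by rewrite -scalemxAl mxE.
Qed.

Lemma segment_comp (R : realType) (d m : nat) (a : 'I_m -> 'rV[R]_d) (b : 'I_m -> R)
  (x y : 'rV[R]_d) :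
  (forall i, 0 < ((x *m (a i)^T) 0 0 - b i) * ((y *m (a i)^T) 0 0 - b i)) ->
  same_component (~` \bigcup_i hyperplane (a i) (b i)) x y.
Proof.
move=> H.
pose f := fun t : R => x + t *: (y - x).
have fc : continuous f.
  move=> t; apply: cvgD; first exact: cvg_cst.
  by apply: cvgZr_tmp; exact: cvg_id.
exists (f @` `[0, 1]); last by exists 1; [rewrite /= in_itv /= lexx ler01 | rewrite /f scale1r addrC subrK].
split.
- by exists 0; [rewrite /= in_itv /= lexx ler01 | rewrite /f scale0r addr0].
- move=> _ [t t01 <-] [i _]; rewrite /hyperplane /= => E.
  have := H i; move: t01; rewrite /= in_itv /= => /andP[t0 t1].
  have : ((f t *m (a i)^T) 0 0 - b i) = (1 - t) * ((x *m (a i)^T) 0 0 - b i) + t * ((y *m (a i)^T) 0 0 - b i).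
    by rewrite /f mulmxDl -scalemxAl mulmxBl !mxE; ring.
  rewrite E subrr => /esym E2.
  set A := (x *m (a i)^T) 0 0 - b i; set B := (y *m (a i)^T) 0 0 - b i.
  move: E2; rewrite -/A -/B => E2 P.
  have Z : (1 - t) * (A * A) + t * (A * B) = 0.
    by rewrite -[RHS](mulr0 A) -E2; ring.
  have AA : 0 < A * A.
    have [A0|A0] := eqVneq A 0; first by move: P; rewrite A0 mul0r ltxx.
    by rewrite lt0r mulf_neq0 //= -expr2 sqr_ge0.
  move: t0; rewrite le_eqVlt => /orP[/eqP t0|t0].
    by move: Z; rewrite -t0 subr0 mul1r mul0r addr0 => Z; move: AA; rewrite Z ltxx.
  have : 0 < (1 - t) * (A * A) + t * (A * B).
    apply: ltr_wpDl; first by apply: mulr_ge0; [rewrite subr_ge0|exact: ltW].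
    exact: mulr_gt0.
  by rewrite Z ltxx.
- apply: connected_continuous_connected; first exact: segment_connected.
  exact: continuous_subspaceT.
Qed.

End Aux.
Import Aux.

Lemma mx11_mul (R : pzRingType) (d : nat) (s : 'M[R]_1) (A : 'M[R]_(1, d)) : s *m A = s 0 0 *: A.
Proof. by rewrite {1}[s]mx11_scalar mul_scalar_mx. Qed.

Lemma scale00 (R : pzRingType) (x : R) (s : 'M[R]_1) : (x *: s) 0 0 = x * s 0 0.
Proof. by rewrite mxE. Qed.

Lemma add00 (R : pzRingType) (s t : 'M[R]_1) : (s + t) 0 0 = s 0 0 + t 0 0.
Proof. by rewrite mxE. Qed.

Lemma sub00 (R : pzRingType) (s t : 'M[R]_1) : (s - t) 0 0 = s 0 0 - t 0 0.
Proof. by rewrite !mxE. Qed.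

Lemma mx11_0 (R : pzRingType) (s : 'M[R]_1) : s 0 0 = 0 -> s = 0.
Proof. by move=> h; apply/matrixP => i j; rewrite !ord1 h mxE. Qed.

Theorem corollary17 (R : realType) (d m : nat) (hd : (2 <= d)%N) (hm : (1 <= m)%N)
  (a : 'I_m -> 'rV[R]_d) (b : 'I_m -> R) (L : set 'rV[R]_d)
  (p : 'I_(2 * m) -> 'rV[R]_d) :
  (forall i, a i != 0) ->
  (forall i j, i != j -> hyperplane (a i) (b i) <> hyperplane (a j) (b j)) ->
  is_flat (d - 2) L ->
  (forall i, L `<=` hyperplane (a i) (b i)) ->
  (* each p k lies in a part, i.e. in the complement of the union *)
  (forall k, ~ (\bigcup_i hyperplane (a i) (b i)) (p k)) ->
  (* distinct points lie in distinct parts (connected components) *)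
  (forall k l, k != l ->
     ~ same_component (~` \bigcup_i hyperplane (a i) (b i)) (p k) (p l)) ->
  ((m + 1) * m * (m - 1))%:R / 3 <= (num_triangles_meeting p L)%:R :> R.
Proof.
move=> Ha Hd Hflat HL Hout Hcomp.
case: Hflat => c [B [Bfree LE]].
have [m1|m2] := eqVneq m 1%N.
  have -> : (m - 1 = 0)%N by rewrite m1.
  by rewrite muln0 mul0r ler0n.
have m_gt1 : (1 < m)%N by rewrite ltn_neqAle eq_sym m2 hm.
pose i0 : 'I_m := Ordinal hm.
pose i1 : 'I_m := Ordinal m_gt1.
have cb i : (c *m (a i)^T) 0 0 = b i.
  by apply: (HL i c); rewrite LE; exists 0; rewrite mul0mx addr0.
have aB i : a i *m B^T = 0.
  apply/matrixP => r j; rewrite [r]ord1 [RHS]mxE.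
  have Lj : L (c + row j B) by rewrite LE; exists (delta_mx 0 j); rewrite rowE.
  have := HL i _ Lj; rewrite /hyperplane /= mulmxDl mxE cb => h.
  have E : ((row j B) *m (a i)^T) 0 0 = 0 by lra.
  rewrite -E !mxE; apply: eq_bigr => k _; rewrite !mxE mulrC.
  by [].
pose M := col_mx (a i0) (a i1).
have rB : \rank B = (d - 2)%N by apply/eqP.
have MB : M *m B^T = 0 by rewrite mul_col_mx !aB col_mx0.
have BM : B *m M^T = 0 by rewrite -[B *m M^T]trmxK trmx_mul trmxK MB trmx0.
have i01 : i0 != i1 by apply/eqP => /(congr1 val).
have n01 : ~~ (a i1 <= a i0)%MS.
  apply/negP => /submxP [r E].
  set l := r 0 0.
  have E' : a i1 = l *: a i0 by rewrite E mx11_mul.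
  have l0 : l != 0 by apply: contra_neq (Ha i1) => l0; rewrite E' l0 scale0r.
  apply: (Hd i0 i1 i01); apply/seteqP; split => x; rewrite /hyperplane /= => h.
    by rewrite -(cb i1) E' !linearZ /= !scale00 h cb.
  apply: (mulfI l0); move: h; rewrite -(cb i1) E' !linearZ /= !scale00 => ->.
  by rewrite cb.
have rM : (2 <= \rank M)%N.
  have lt : (a i0 < a i0 + a i1)%MS.
    by rewrite ltmxE addsmxSl /= addsmx_sub submx_refl.
  have := rank_ltmx lt; rewrite rank_rV Ha /=.
  by rewrite /M -addsmxE.
have rk1 : (d <= \rank B + \rank M)%N by rewrite rB; lia.
have rk2 : (d <= \rank M + \rank B)%N by rewrite addnC.
have aM i : (a i <= M)%MS := ker_sub MB rk2 (aB i).
pose r i := a i *m pinvmx M.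
pose al i := (lsubmx (r i)) 0 0.
pose be i := (rsubmx (r i)) 0 0.
have aE i : a i = al i *: a i0 + be i *: a i1.
  have h : a i = r i *m M by rewrite /r mulmxKpV.
  by rewrite {1}h -{1}[r i]hsubmxK mul_row_col !mx11_mul.
pose u k := ((p k - c) *m (a i0)^T) 0 0.
pose v k := ((p k - c) *m (a i1)^T) 0 0.
have ggE i k : gg u v al be i k = (p k *m (a i)^T) 0 0 - b i.
  rewrite -(cb i) -sub00 -mulmxBl.
  by rewrite [in RHS](aE i) linearD !linearZ /= mulmxDr add00 -!scalemxAr !scale00.
have Hg i k : gg u v al be i k != 0.
  rewrite ggE subr_eq0; apply/negP => /eqP h; apply: (Hout k).
  by exists i => //.
have Hs k l : (forall i, (0 < gg u v al be i k) = (0 < gg u v al be i l)) -> k = l.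
  move=> H; apply/eqP; apply/negPn/negP => kl; apply: (Hcomp k l kl).
  apply: segment_comp => i; rewrite -!ggE.
  have := H i; have := Hg i k; have := Hg i l.
  case: (ltgtP 0 (gg u v al be i k)) => [gk|gk|gk]; last by [].
    by move=> _ _ /esym gl; rewrite mulr_gt0.
  move=> nl _ gl; rewrite nmulr_rgt0 //.
  by rewrite lt_neqAle nl /= leNgt -gl.
pose Q := fun S : {set 'I_(2 * m)} => `[< exists x, L x /\ conv_hull p S x >].
have HQ (S : {set 'I_(2 * m)}) : #|S| = 3%N -> Zc u v S -> Q S.
  move=> _ [w [w0 wS w1 wu wv]]; apply/asboolP.
  exists (\sum_j w j *: p j); split; last by exists w.
  set x := \sum_j w j *: p j.
  have xc : x - c = \sum_j w j *: (p j - c).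
    rewrite -[c in LHS]scale1r -w1 scaler_suml -sumrB; apply: eq_bigr => j _.
    by rewrite scalerBr.
  have sub : (x - c <= B)%MS.
    apply: (ker_sub BM rk1).
    rewrite tr_col_mx mul_mx_row.
    rewrite (@mx11_0 _ ((x - c) *m (a i0)^T)); last by rewrite xc lin_entry.
    rewrite (@mx11_0 _ ((x - c) *m (a i1)^T)); last by rewrite xc lin_entry.
    by rewrite row_mx0.
  case/submxP: sub => z Ez; rewrite LE; exists z.
  by rewrite -Ez addrC subrK.
have := count_main Hg Hs hm HQ (erefl _).
rewrite -/(num_triangles_meeting p L) => H.
rewrite ler_pdivrMr // -natrM ler_nat mulnC.
rewrite [X in (X <= _)%N]mulnC [X in (_ <= X)%N]mulnC; apply: (leq_trans H).
rewrite leq_mul2l /= /num_triangles_meeting; apply: eq_leq; apply: eq_card => S; rewrite !inE. rewrite /in_mem /mem /= /in_set asboolb. by [].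
Qed.
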